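(* Let $L=L(f,0)$ be a $3\mathbb Z$-periodic Leibniz algebra over a field $K$ with structure matrix $(\alpha_{ij})_{i,j\in\{0,1,2\}}$. Then $L$ is right nilpotent if and only if $\alpha_{i0}=0$ for $i=0,1,2$, $\alpha_{01}\alpha_{11}\alpha_{21}=\alpha_{02}\alpha_{12}\alpha_{22}=0$, and $\alpha_{01}\alpha_{12}=\alpha_{11}\alpha_{22}=\alpha_{21}\alpha_{02}=0$.
   Context: $L(f,0)$ is the $K$-algebra with basis $\{e_a:a\in\mathbb Z\}$ and multiplication $e_ae_b=f(a,b)e_{a+b}$; it is $3\mathbb Z$-periodic with structure matrix $(\alpha_{ij})$ if $f(a,b)=\alpha_{a\bmod 3,\,b\bmod 3}$; it is Leibniz if $x(yz)=(xy)z-(xz)y$ for all $x,y,z$. An algebra is right nilpotent if there is $N$ with $(\cdots((x_1x_2)x_3)\cdots)x_N=0$ for all $x_1,\dots,x_N$. *)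

(* Defs.v *)
From HB Require Import structures.
From mathcomp Require Import all_boot all_order all_algebra.
Set Implicit Arguments. Unset Strict Implicit. Unset Printing Implicit Defensive.
Import Order.TTheory GRing.Theory Num.Theory.
Local Open Scope ring_scope.

(* An element of L(f,0) is a finite linear combination sum_k c_k e_{a_k},
   represented by the list of pairs (a_k, c_k).  Two representations denote
   the same element iff their coefficient functions agree. *)
Definition lelt (K : fieldType) := seq (int * K).

Definition lcoef (K : fieldType) (x : lelt K) (c : int) : K :=
  \sum_(p <- x) (p.1 == c)%:R * p.2.

Definition lbasis (K : fieldType) (a : int) : lelt K := [:: (a, 1)].

(* product, bilinear extension of e_a e_b = f(a,b) e_{a+b} *)
Definition lmul (K : fieldType) (f : int -> int -> K) (x y : lelt K) : lelt K :=
  [seq (p.1 + q.1, f p.1 q.1 * p.2 * q.2) | p <- x, q <- y].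

Definition lsub (K : fieldType) (x y : lelt K) : lelt K :=
  x ++ [seq (q.1, - q.2) | q <- y].

Definition leq_el (K : fieldType) (x y : lelt K) : Prop :=
  forall c : int, lcoef x c = lcoef y c.

Definition is_leibniz (K : fieldType) (f : int -> int -> K) : Prop :=
  forall x y z : lelt K,
    leq_el (lmul f x (lmul f y z))
           (lsub (lmul f (lmul f x y) z) (lmul f (lmul f x z) y)).

(* right nilpotent: some N such that every left-normed product
   (...((x_0 x_1) x_2)...) x_N of N+1 elements vanishes
   (here x_0 = x and xs = [x_1; ...; x_N]); i.e. the paper's N >= 1. *)
Definition right_nilpotent (K : fieldType) (f : int -> int -> K) : Prop :=
  exists N : nat, forall (x : lelt K) (xs : seq (lelt K)),
    size xs = N -> leq_el (foldl (lmul f) x xs) [::].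

Definition idx3 (a : int) : 'I_3 := inord `|(a %% 3)%Z|%N.

Definition o0 : 'I_3 := @Ordinal 3 0 isT.
Definition o1 : 'I_3 := @Ordinal 3 1 isT.
Definition o2 : 'I_3 := @Ordinal 3 2 isT.

Definition periodic3 (K : fieldType) (f : int -> int -> K) (A : 'M[K]_3) : Prop :=
  forall a b : int, f a b = A (idx3 a) (idx3 b).

(* Main.v *)
Require Import Defs.
From HB Require Import structures.
From mathcomp Require Import all_boot all_order all_algebra.
From mathcomp Require Import ring zify.
Import GRing.Theory Num.Theory.
Local Open Scope ring_scope.
Lemma idx3_val a : nat_of_ord (idx3 a) = `|(a %% 3)%Z|%N.
Proof. rewrite /idx3 inordK //. have h3 : (0 < 3 :> int) by []. have := ltz_pmod a h3. have := modz_ge0 a (lt0r_neq0 h3). lia. Qed.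
Lemma idx3_eq (i : 'I_3) a : `|(a %% 3)%Z|%N = val i -> idx3 a = i.
Proof. by move=> h; apply: val_inj; rewrite /= idx3_val. Qed.
Lemma idx3_mod x y : (x %% 3 = y %% 3)%Z -> idx3 x = idx3 y.
Proof. by rewrite /idx3 => ->. Qed.
Lemma mod3_cases a : (a %% 3 = 0 \/ a %% 3 = 1 \/ a %% 3 = 2)%Z.
Proof. have h3 : (0 < 3 :> int) by []. have := ltz_pmod a h3. have := modz_ge0 a (lt0r_neq0 h3). lia. Qed.

Ltac red3 := repeat match goal with |- context [idx3 ?x] =>
  first [ rewrite (@idx3_eq o0 x (erefl 0%N)) | rewrite (@idx3_eq o1 x (erefl 1%N))
        | rewrite (@idx3_eq o2 x (erefl 2%N)) ] end.

Ltac close0 := match goal with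
 | H : ?a * ?b = 0 |- ?a * ?b * _ = 0 => by rewrite H mul0r
 | H : ?b * ?c = 0 |- _ * ?b * ?c = 0 => by rewrite -mulrA H mulr0
 | H : ?a * ?b * ?c = 0 |- ?a * ?b * ?c = 0 => exact H
 end.

Lemma key (K : fieldType) (A : 'M[K]_3) (f : int -> int -> K) (hper : periodic3 f A)
  (H0 : forall i : 'I_3, A i o0 = 0)
  (h3a : A o0 o1 * A o1 o1 * A o2 o1 = 0)
  (h3b : A o0 o2 * A o1 o2 * A o2 o2 = 0)
  (h1 : A o0 o1 * A o1 o2 = 0) (h2 : A o1 o1 * A o2 o2 = 0) (h3 : A o2 o1 * A o0 o2 = 0)
  a0 a1 a2 a3 :
  f a0 a1 * f (a0 + a1) a2 * f (a0 + a1 + a2) a3 = 0.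
Proof.
have h1' : A o1 o2 * A o0 o1 = 0 by rewrite -h1; ring.
have h2' : A o2 o2 * A o1 o1 = 0 by rewrite -h2; ring.
have h3' : A o0 o2 * A o2 o1 = 0 by rewrite -h3; ring.
have h3a' : A o1 o1 * A o2 o1 * A o0 o1 = 0 by rewrite -h3a; ring.
have h3a'' : A o2 o1 * A o0 o1 * A o1 o1 = 0 by rewrite -h3a; ring.
have h3b1 : A o0 o2 * A o2 o2 * A o1 o2 = 0 by rewrite -h3b; ring.
have h3b2 : A o2 o2 * A o1 o2 * A o0 o2 = 0 by rewrite -h3b; ring.
have h3b3 : A o1 o2 * A o0 o2 * A o2 o2 = 0 by rewrite -h3b; ring.
rewrite !hper.
rewrite (@idx3_mod (a0) ((a0 %% 3)%Z)) ?modz_mod //.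
rewrite (@idx3_mod (a1) ((a1 %% 3)%Z)) ?modz_mod //.
rewrite (@idx3_mod (a2) ((a2 %% 3)%Z)) ?modz_mod //.
rewrite (@idx3_mod (a3) ((a3 %% 3)%Z)) ?modz_mod //.
rewrite (@idx3_mod (a0 + a1) ((a0 %% 3)%Z + (a1 %% 3)%Z)) ?modzDm //.
rewrite (@idx3_mod (a0 + a1 + a2) ((a0 %% 3)%Z + (a1 %% 3)%Z + (a2 %% 3)%Z)); last first.
  by rewrite -[LHS]modzDm -(modzDm a0 a1) modzDml.
case: (mod3_cases a0) => [->|[->|->]];
case: (mod3_cases a1) => [->|[->|->]];
case: (mod3_cases a2) => [->|[->|->]];
case: (mod3_cases a3) => [->|[->|->]]; red3;
rewrite ?H0 ?mul0r ?mulr0 ?mul0r //; close0.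
Qed.

Lemma lcoef0 (K : fieldType) (y : lelt K) c : (forall p, p \in y -> p.2 = 0) -> lcoef y c = 0.
Proof. move=> h; rewrite /lcoef big_seq big1 //; by move=> p /h ->; rewrite mulr0. Qed.

Fixpoint pw {K : fieldType} (f : int -> int -> K) (a : int) (bs : seq int) : K :=
  match bs with [::] => 1 | b :: bs' => f a b * pw f (a + b) bs' end.

Definition sumi (bs : seq int) : int := foldr (fun b s => b + s) 0 bs.

Lemma fold_basis (K : fieldType) (f : int -> int -> K) a c bs :
  exists a', foldl (lmul f) [:: (a, c)] (map (@lbasis K) bs) = [:: (a', c * pw f a bs)].
Proof.
elim: bs a c => [|b bs IH] a c /=; first by exists a; rewrite mulr1.
have [a' ->] := IH (a + b) (f a b * c * 1).
by exists a'; congr [:: (_, _)]; ring.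
Qed.

Lemma pw_cat (K : fieldType) (f : int -> int -> K) a s1 s2 :
  pw f a (s1 ++ s2) = pw f a s1 * pw f (a + sumi s1) s2.
Proof.
elim: s1 a => [|b s1 IH] a /=; first by rewrite mul1r addr0.
by rewrite IH addrA mulrA.
Qed.

Lemma pw_mod (K : fieldType) (f : int -> int -> K) (A : 'M[K]_3) (hper : periodic3 f A) bs :
  forall a a', (a %% 3 = a' %% 3)%Z -> pw f a bs = pw f a' bs.
Proof.
elim: bs => [|b bs IH] a a' h //=.
rewrite !hper (idx3_mod _ _ h) (IH (a + b) (a' + b)) //.
by rewrite -modzDml h modzDml.
Qed.

Lemma size_rep (c : seq int) n : size (flatten (nseq n c)) = (n * size c)%N.
Proof. by elim: n => //= n IH; rewrite size_cat IH mulSn. Qed.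

Lemma pw_rep (K : fieldType) (f : int -> int -> K) (A : 'M[K]_3) (hper : periodic3 f A) a c n :
  ((a + sumi c) %% 3 = a %% 3)%Z -> pw f a (flatten (nseq n c)) = pw f a c ^+ n.
Proof.
move=> h; elim: n => [|n IH] /=; first by rewrite expr0.
by rewrite pw_cat (@pw_mod _ _ _ hper _ _ _ h) IH exprS.
Qed.

Theorem corollary4p8 (K : fieldType) (f : int -> int -> K) (A : 'M[K]_3)
    (hper : periodic3 f A) (hleib : is_leibniz f) :
  right_nilpotent f <->
  [/\ forall i : 'I_3, A i o0 = 0,
      A o0 o1 * A o1 o1 * A o2 o1 = 0,
      A o0 o2 * A o1 o2 * A o2 o2 = 0 &
      [/\ A o0 o1 * A o1 o2 = 0, A o1 o1 * A o2 o2 = 0 & A o2 o1 * A o0 o2 = 0]].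
Proof.
split.
- move=> [N hN].
  have hN1 : forall a bs, size bs = N -> pw f a bs = 0.
    move=> a bs hs; have [a' E] := @fold_basis _ f a 1 bs.
    have := hN (lbasis K a) (map (@lbasis K) bs); rewrite size_map => /(_ hs a').
    rewrite /lbasis E /lcoef !big_cons !big_nil eqxx /= !mul1r addr0; apply.
  have hN2 : forall a bs, (N <= size bs)%N -> pw f a bs = 0.
    move=> a bs hs; rewrite -(cat_take_drop N bs) pw_cat hN1 ?mul0r //.
    by rewrite size_takel.
  have N0 : (0 < N)%N.
    case: N hN hN1 hN2 => // _ h _.
    by have := h 0 [::] erefl; move/eqP; rewrite oner_eq0.
  have cyc : forall a c, c != [::] -> ((a + sumi c) %% 3 = a %% 3)%Z -> pw f a c = 0.
    move=> a c hc hm.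
    move: (hN2 a (flatten (nseq N c))); rewrite size_rep (@pw_rep _ _ _ hper _ _ _ hm) => h.
    have hs : (N <= N * size c)%N by case: c hc hm {h} => //= x s _ _; rewrite leq_pmulr.
    by move/eqP: (h hs); rewrite expf_eq0 N0 => /eqP.
  split.
  + move=> i.
    have : i = o0 \/ i = o1 \/ i = o2.
      by case: i => [[|[|[|//]]] h]; [left|right;left|right;right]; apply: val_inj.
    case=> [->|[->|->]].
    * by move: (cyc 0 [:: 0] isT erefl); rewrite /= !hper mulr1; red3.
    * by move: (cyc 1 [:: 0] isT erefl); rewrite /= !hper mulr1; red3.
    * by move: (cyc 2 [:: 0] isT erefl); rewrite /= !hper mulr1; red3.
  + move: (cyc 0 [:: 1; 1; 1] isT erefl); rewrite /= !hper; red3 => h; rewrite -h; ring.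
  + move: (cyc 0 [:: 2; 2; 2] isT erefl); rewrite /= !hper; red3 => h; rewrite -h; ring.
  + split.
    * move: (cyc 0 [:: 1; 2] isT erefl); rewrite /= !hper; red3 => h; rewrite -h; ring.
    * move: (cyc 1 [:: 1; 2] isT erefl); rewrite /= !hper; red3 => h; rewrite -h; ring.
    * move: (cyc 2 [:: 1; 2] isT erefl); rewrite /= !hper; red3 => h; rewrite -h; ring.
- move=> [H0 h3a h3b [h1 h2 h3]].
  exists 3%N => x [|x1 [|x2 [|x3 [|//]]]] // _ c /=.
  rewrite [RHS]/lcoef big_nil; apply: lcoef0 => p.
  move=> /allpairsP [[q p3] [/= hq _ ->]].
  move: hq => /allpairsP [[r p2] [/= hr _ ->]].
  move: hr => /allpairsP [[p0 p1] [/= _ _ ->]] /=.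
  have hk := @key _ _ _ hper H0 h3a h3b h1 h2 h3 p0.1 p1.1 p2.1 p3.1.
  transitivity (f p0.1 p1.1 * f (p0.1 + p1.1) p2.1 * f (p0.1 + p1.1 + p2.1) p3.1
     * (p0.2 * p1.2 * p2.2 * p3.2)); first by ring.
  by rewrite hk mul0r.
Qed.
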